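(* Let $D$ and $H$ be digraphs such that $H$ is equivalent to $D$ under source-sink identification. Then $\operatorname{dbw}(H)=\operatorname{dbw}(D)$.
   Context: All digraphs are finite and loopless, without parallel edges. A source is a vertex with no incoming edges, a sink a vertex with no outgoing edges. Two vertices $x\neq y$ are source/sink-identifiable if both are sources or both are sinks. Identifying them means replacing $x,y$ by a single new vertex $\gamma$ with in-neighbourhood $N^-(x)\cup N^-(y)$ and out-neighbourhood $N^+(x)\cup N^+(y)$. $H$ is equivalent to $D$ under source-sink identification if $H$ is obtained from $D$ by a finite sequence of identifications of source/sink-identifiable pairs. Directed branch-width: for $X\subseteq E(D)$, $S^V_X=\{y: \exists x,z,\ \vec{xy}\in E(D)\setminus X,\ \vec{yz}\in X\}$, $f_D(X)=|S^V_X\cup S^V_{E(D)\setminus X}|$; a directed branch decomposition is $(T,\beta)$ with $T$ a tree of maximum degree at most three and $\beta$ a bijection from the leaves of $T$ onto $E(D)$; the order of a tree edge is $f_D(\beta(Y))$ for $Y$ the leaves on one side; the width is the maximum order (0 if none), and $\operatorname{dbw}(D)$ is the minimum width. *)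

(* Defs.v *)
From mathcomp Require Import all_boot.
Set Implicit Arguments. Unset Strict Implicit. Unset Printing Implicit Defensive.

Record digraph := Digraph {
  dV : finType;
  dE : rel dV;
  dE_irr : irreflexive dE }.

Definition edges (D : digraph) : {set dV D * dV D} :=
  [set p | dE p.1 p.2].

Definition is_source (D : digraph) (x : dV D) : bool := [forall u, ~~ dE u x].
Definition is_sink (D : digraph) (x : dV D) : bool := [forall u, ~~ dE x u].

Definition ss_identifiable (D : digraph) (x y : dV D) : bool :=
  (x != y) && ((is_source x && is_source y) || (is_sink x && is_sink y)).

(* H is (an isomorphic copy of) the digraph obtained from D by identifying
   x and y into a single vertex: f : V(D) -> V(H) is surjective, glues
   exactly x and y, and the arcs of H are the images of the arcs of D
   (so the new vertex gets in/out-neighbourhoods N^-(x)∪N^-(y), N^+(x)∪N^+(y)). *)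
Definition identification_of (D H : digraph) (x y : dV D) : Prop :=
  exists f : dV D -> dV H,
    [/\ (forall b : dV H, exists a, f a = b),
        f x = f y,
        (forall u v, f u = f v -> u = v \/ (u = x /\ v = y) \/ (u = y /\ v = x))
      & (forall a b : dV H, dE a b <->
           exists u v, [/\ f u = a, f v = b & dE u v])].

Definition ss_step (D H : digraph) : Prop :=
  exists x y : dV D, ss_identifiable x y /\ identification_of H x y.

Definition isomorphic (D H : digraph) : Prop :=
  exists f : dV D -> dV H, bijective f /\ (forall u v, dE (f u) (f v) = dE u v).

Inductive ss_equiv : digraph -> digraph -> Prop :=
  | ss_equiv_iso D H : isomorphic D H -> ss_equiv D H
  | ss_equiv_step D D' H : ss_step D D' -> ss_equiv D' H -> ss_equiv D H.

Section DBW.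
Variable D : digraph.
Local Notation V := (dV D).

Definition SV (X : {set V * V}) : {set V} :=
  [set y | [exists x, exists z,
      ((x, y) \in edges D :\: X) && ((y, z) \in X)]].

Definition fD (X : {set V * V}) : nat :=
  #|SV X :|: SV (edges D :\: X)|.

Definition is_tree (T : finType) (te : rel T) : Prop :=
  [/\ symmetric te, irreflexive te,
      (forall u v, connect te u v)
    & (forall (x : T) (p : seq T), uniq (x :: p) -> 2 <= size p ->
         path te x p -> ~~ te (last x p) x)].

Definition tdeg (T : finType) (te : rel T) (t : T) : nat := #|[set u | te t u]|.

Definition tleaves (T : finType) (te : rel T) : {set T} :=
  [set t | tdeg te t <= 1].

Record dbdec := DBDec {
  dT : finType;
  dTE : rel dT;
  dT_tree : is_tree dTE;
  dT_deg : forall t, tdeg dTE t <= 3;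
  dbeta : dT -> V * V;
  dbeta_inj : {in tleaves dTE &, injective dbeta};
  dbeta_in : forall t, t \in tleaves dTE -> dbeta t \in edges D;
  dbeta_onto : forall e, e \in edges D -> exists2 t, t \in tleaves dTE & dbeta t = e }.

(* leaves on the side of u after deleting tree edge tu *)
Definition side (B : dbdec) (t u : dT B) : {set dT B} :=
  [set l in tleaves (@dTE B) |
     connect (fun a b => dTE a b && ~~ (((a == t) && (b == u)) || ((a == u) && (b == t)))) u l].

Definition edge_order (B : dbdec) (t u : dT B) : nat :=
  fD (@dbeta B @: side t u).

Definition width (B : dbdec) : nat :=
  \max_(p : dT B * dT B | dTE p.1 p.2) edge_order p.1 p.2.

Definition dbw_is (k : nat) : Prop :=
  (exists B : dbdec, width B = k) /\ (forall B : dbdec, k <= width B).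

End DBW.

(* Main.v *)
Require Import Defs.
From mathcomp Require Import all_boot.
From Stdlib Require Import ClassicalEpsilon.
Set Implicit Arguments. Unset Strict Implicit. Unset Printing Implicit Defensive.


Section Generic.
Variable T : finType.
Variable te : rel T.

Definition rme (t u : T) : rel T :=
  fun a b => te a b && ~~ (((a == t) && (b == u)) || ((a == u) && (b == t))).

Lemma rme_sym t u : symmetric te -> symmetric (rme t u).
Proof.
move=> s a b; rewrite /rme s; congr (_ && ~~ _).
by case: (a == t); case: (b == u); case: (a == u); case: (b == t).
Qed.

Lemma cover_lem t u w : connect te u w ->
  connect (rme t u) u w || connect (rme t u) t w.
Proof.
move/connectP=> [p]; elim/last_ind: p w => [|p z IH] w /=.
  by move=> _ ->; rewrite connect0.
rewrite rcons_path last_rcons => /andP[pp ez] ->.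
have /orP[c|c] := IH _ pp erefl.
all: case R: (rme t u (last u p) z); first by rewrite (connect_trans c (connect1 R)) ?orbT.
all: move: R; rewrite /rme ez /= => /negbFE /orP[] /andP[_ /eqP->]; by rewrite connect0 ?orbT.
Qed.

Lemma disj_lem t u w : is_tree te -> te t u ->
  connect (rme t u) u w -> connect (rme t u) t w -> False.
Proof.
case=> sym irr _ acyc tu cuw ctw.
have ssym := rme_sym t u sym.
have cut : connect (rme t u) u t.
  by apply: connect_trans cuw _; rewrite (sym_connect_sym ssym).
move/connectP: cut => [p pp lp].
move: lp; case: (shortenP pp) => p' pp' up' _ lp.
have pt : path te u p' by apply: sub_path pp' => a b /andP[].
case: p' pp' up' pt lp => [|z1 [|z2 p2]] /=.
- by move=> _ _ _ tE; move: tu; rewrite tE irr.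
- move=> + _ _; rewrite /= andbT => + tE; rewrite -tE /rme !eqxx /=. rewrite orbT andbF. done.
- move=> _ up pt lt; have := acyc u [:: z1, z2 & p2] up isT pt.
  by rewrite /= -lt tu.
Qed.

Lemma cycle_nbrs x p w : symmetric te -> uniq (x :: p) -> 2 <= size p ->
  path te x p -> te (last x p) x -> w \in x :: p ->
  exists a b, [/\ a != b, te w a & te w b].
Proof.
move=> sym up sp pp lp wi.
have cyc : cycle te (x :: p) by rewrite /= rcons_path pp lp.
case: (rot_to wi) => i s' rE.
have := rot_cycle i te (x :: p); rewrite rE cyc => cyc'.
have := rot_uniq i (x :: p); rewrite rE up => up'.
have := size_rot i (x :: p); rewrite rE /= => [[ss]].
case: s' rE cyc' up' ss => [|a [|b s]] //= rE; try by move=> _ _ sE; move: sp; rewrite -sE.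
move=> /and3P[wa _]; rewrite rcons_path => /andP[_ lw] /and4P[_ anin _ _] _.
exists a, (last b s); split => //; last by rewrite sym.
by apply/eqP => aE; move: anin; rewrite aE mem_last.
Qed.

Lemma connect_homo (T2 : finType) (e2 : rel T2) (f : T -> T2) :
  (forall a b, te a b -> connect e2 (f a) (f b)) ->
  forall a b, connect te a b -> connect e2 (f a) (f b).
Proof.
move=> H a b /connectP[p pp ->]; elim: p a pp => [|z p IH] a /=.
  by rewrite connect0.
by move=> /andP[az pz]; apply: connect_trans (H _ _ az) (IH _ pz).
Qed.

End Generic.


Lemma inEdges (G : digraph) (p : dV G * dV G) : (p \in edges G) = dE p.1 p.2.
Proof. by rewrite inE. Qed.

Lemma SVP (G : digraph) (X : {set dV G * dV G}) y :
  reflect (exists x z, [/\ dE x y, (x, y) \notin X & (y, z) \in X]) (y \in SV X).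
Proof.
rewrite inE; apply: (iffP existsP) => [[x /existsP[z /andP[]]]|[x [z [xy nX yz]]]].
  by rewrite inE inEdges /= => /andP[nX xy] yz; exists x, z.
by exists x; apply/existsP; exists z; rewrite inE inEdges /= xy nX yz.
Qed.

Lemma fD_sym (G : digraph) (X : {set dV G * dV G}) :
  X \subset edges G -> fD (edges G :\: X) = fD X.
Proof.
move=> sX; rewrite /fD.
have -> : edges G :\: (edges G :\: X) = X.
  apply/setP => e; rewrite !inE; case: (boolP (e \in X)) => eX; rewrite ?andbF ?andbT //.
  by move: (subsetP sX _ eX); rewrite inE.
  by case: (dE e.1 e.2).
by rewrite setUC.
Qed.

Section Counting.
Variables (D H : digraph).
Variable pi : dV D -> dV H.
Variable Q : {set dV D}.
Hypothesis R1 : forall u v, dE u v -> dE (pi u) (pi v).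
Hypothesis R3 : forall u v, pi u = pi v -> u = v \/ (u \in Q /\ v \in Q).
Hypothesis R4 : (forall u, u \in Q -> is_source u) \/ (forall u, u \in Q -> is_sink u).

Definition pi2 (e : dV D * dV D) : dV H * dV H := (pi e.1, pi e.2).

Lemma pi2_edge e : e \in edges D -> pi2 e \in edges H.
Proof. by rewrite !inEdges => /R1. Qed.

Lemma pi_inj2 v v1 b a : dE v b -> dE a v1 -> pi v = pi v1 -> v = v1.
Proof.
move=> vb av1 /R3 [//|[vQ v1Q]]; case: R4 => R.
  by move: (R _ v1Q) => /forallP /(_ a); rewrite av1.
by move: (R _ vQ) => /forallP /(_ b); rewrite vb.
Qed.

Lemma pi_edge_neq e : e \in edges D -> pi e.1 <> pi e.2.
Proof.
rewrite inEdges => ee E.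
have := pi_inj2 ee ee E => E2; move: ee; rewrite E2.
by rewrite (@dE_irr D).
Qed.

Lemma countB (Y : {set dV D * dV D}) (X' : {set dV H * dV H}) :
  Y \subset edges D ->
  (forall e1 e2, e1 \in edges D -> e2 \in edges D -> e1.2 = e2.1 ->
     e1 \notin Y -> e2 \in Y -> pi2 e1 \notin X' /\ pi2 e2 \in X') ->
  (forall e1 e2, e1 \in edges D -> e2 \in edges D -> e1.2 = e2.1 ->
     e1 \in Y -> e2 \notin Y -> pi2 e1 \in X' /\ pi2 e2 \notin X') ->
  fD Y <= fD X'.
Proof.
move=> sY h1 h2; rewrite /fD.
have inout v : v \in SV Y :|: SV (edges D :\: Y) -> exists a b, dE a v /\ dE v b.
  case/setUP => /SVP [x [z [xv _ vz]]]; exists x, z; split => //.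
    by move: (subsetP sY _ vz); rewrite inEdges.
  by move: vz; rewrite inE inEdges => /andP[].
rewrite -(card_in_imset (f := pi)); last first.
  move=> u v /inout [a [b [au ub]]] /inout [a' [b' [av vb]]].
  exact: pi_inj2 ub av.
apply: subset_leq_card; apply/subsetP => w /imsetP [v vin ->].
case/setUP: vin => /SVP [x [z [xv nX vz]]].
  have ez : (v, z) \in edges D by apply: (subsetP sY).
  have ex : (x, v) \in edges D by rewrite inEdges.
  have [h h'] := h1 _ _ ex ez erefl nX vz.
  apply/setUP; left; apply/SVP; exists (pi x), (pi z); split => //.
  by apply: R1.
have ex : (x, v) \in edges D by rewrite inEdges.
move: vz; rewrite inE => /andP [nY ez].
move: nX; rewrite inE ex andbT negbK => xY.
have [h h'] := h2 _ _ ex ez erefl xY nY.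
apply/setUP; right; apply/SVP; exists (pi x), (pi z); split.
- by apply: R1.
- by rewrite inE negb_and negbK h.
- by rewrite inE h' (pi2_edge ez).
Qed.

Lemma inPre (X' : {set dV H * dV H}) e :
  (e \in [set e in edges D | pi2 e \in X']) = (e \in edges D) && (pi2 e \in X').
Proof. by rewrite !inE. Qed.

Lemma countB_pre (X' : {set dV H * dV H}) :
  fD [set e in edges D | pi2 e \in X'] <= fD X'.
Proof.
apply: countB.
- by apply/subsetP => e; rewrite inPre => /andP[].
- by move=> e1 e2 ee1 ee2 _; rewrite !inPre ee1 ee2.
- by move=> e1 e2 ee1 ee2 _; rewrite !inPre ee1 ee2.
Qed.

Lemma countB_one c : c \in edges D -> fD [set c] <= fD [set pi2 c].
Proof.
move=> ec; apply: countB.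
- by rewrite sub1set.
- move=> e1 e2 ee1 _ E12; rewrite !inE => n1 /eqP E2; subst e2.
  split => //; apply/eqP => P; move: P ee1 E12.
  case: e1 c ec n1 => [a b] [c1 c2] ec n1 [_ P] _ /= E; subst b.
  by apply: (pi_edge_neq ec); rewrite /= -P.
- move=> e1 e2 _ ee2 E12; rewrite !inE => /eqP E1 n2; subst e1.
  split => //; apply/eqP => P; move: P ee2 E12.
  case: e2 c ec n2 => [a b] [c1 c2] ec n2 [P _] _ /= E; subst a.
  by apply: (pi_edge_neq ec); rewrite /= -P.
Qed.

Lemma countA (S Y : {set dV D * dV D}) :
  S \subset edges D -> {in S &, injective pi2} ->
  (forall e', e' \in edges H -> exists2 s, s \in S & pi2 s = e') ->
  SV (pi2 @: (Y :&: S)) \subset pi @: SV Y.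
Proof.
move=> sS iS oS; apply/subsetP => w /SVP [a [b [aw nI wb]]].
have : (a, w) \in edges H by rewrite inEdges.
case/oS => s1 s1S s1E.
case/imsetP: wb => s /setIP [sY sS'] sE.
have es : s \in edges D by apply: (subsetP sS).
have es1 : s1 \in edges D by apply: (subsetP sS).
have E : s.1 = s1.2.
  apply: (@pi_inj2 _ _ s.2 s1.1); rewrite -?inEdges -?surjective_pairing //.
  by case: sE => <- _; case: s1E => _ ->.
apply/imsetP; exists s.1; last by case: sE.
apply/SVP; exists s1.1, s.2; split; rewrite -?surjective_pairing //.
- by rewrite E -inEdges.
- rewrite E -surjective_pairing; apply: contra nI => s1Y.
  by rewrite -s1E; apply: imset_f; rewrite inE s1Y.
Qed.

Lemma countA_fD (S X : {set dV D * dV D}) :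
  S \subset edges D -> {in S &, injective pi2} ->
  (forall e', e' \in edges H -> exists2 s, s \in S & pi2 s = e') ->
  fD (pi2 @: (X :&: S)) <= fD X.
Proof.
move=> sS iS oS.
have cE : edges H :\: pi2 @: (X :&: S) = pi2 @: ((edges D :\: X) :&: S).
  apply/setP => e'; apply/idP/idP.
    rewrite inE => /andP [nI /oS [s sS' sE]].
    apply/imsetP; exists s => //; rewrite in_setI sS' andbT in_setD (subsetP sS _ sS') andbT.
    by apply: contra nI => sX; rewrite -sE; apply: imset_f; rewrite inE sX.
  case/imsetP => s /setIP [/setDP [es nX] sS'] ->.
rewrite in_setD;   rewrite (pi2_edge es) andbT; apply/imsetP => [[s2]].
  rewrite inE => /andP[s2X s2S] E; move: nX; rewrite (iS _ _ sS' s2S E).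
  by rewrite s2X.
rewrite /fD cE.
apply: leq_trans (leq_imset_card pi _).
apply: subset_leq_card; rewrite imsetU; apply: setUSS; exact: countA.
Qed.

End Counting.


Definition pb (P : Prop) : bool := if excluded_middle_informative P then true else false.
Lemma pbP P : reflect P (pb P).
Proof. by rewrite /pb; case: excluded_middle_informative => h; constructor. Qed.

Section DirA.
Variables (D H : digraph) (pi : dV D -> dV H) (Q : {set dV D}).
Hypothesis R1 : forall u v, dE u v -> dE (pi u) (pi v).
Hypothesis R2 : forall a b, dE a b -> exists u v, [/\ pi u = a, pi v = b & dE u v].
Hypothesis R3 : forall u v, pi u = pi v -> u = v \/ (u \in Q /\ v \in Q).
Hypothesis R4 : (forall u, u \in Q -> is_source u) \/ (forall u, u \in Q -> is_sink u).

Definition canon (e' : dV H * dV H) := [pick e2 in edges D | pi2 pi e2 == e'].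

Lemma canonP e' s : canon e' = Some s -> (s \in edges D) && (pi2 pi s == e').
Proof. by rewrite /canon; case: pickP => [x Px [<-]|]. Qed.

Lemma canonN e' : canon e' = None -> forall s, ~~ ((s \in edges D) && (pi2 pi s == e')).
Proof. by rewrite /canon; case: pickP => [//|N _ s]; rewrite N. Qed.

Definition SelE : {set dV D * dV D} := [set e in edges D | canon (pi2 pi e) == Some e].

Lemma inSelE e : (e \in SelE) = (e \in edges D) && (canon (pi2 pi e) == Some e).
Proof. by rewrite !inE. Qed.

Lemma SelE_sub : SelE \subset edges D.
Proof. by apply/subsetP => e; rewrite inE => /andP[]. Qed.

Lemma SelE_inj : {in SelE &, injective (pi2 pi)}.
Proof.
move=> e1 e2; rewrite !inE => /andP[_ /eqP P1] /andP[_ /eqP P2] E.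
by move: P1; rewrite E P2 => [[]].
Qed.

Lemma SelE_onto e' : e' \in edges H -> exists2 s, s \in SelE & pi2 pi s = e'.
Proof.
rewrite inEdges => /R2 [u [v [P1 P2 uv]]].
case Ec: (canon e') => [s|].
  move/canonP: (Ec) => /andP[es /eqP sE]; exists s => //.
  by rewrite inSelE es sE /=; apply/eqP.
move: (canonN Ec (u, v)); rewrite inEdges uv /= /pi2 /= P1 P2.
by rewrite -surjective_pairing eqxx.
Qed.

Variable B : dbdec D.
Local Notation T := (dT B).
Local Notation te := (@dTE D B).
Local Notation beta := (@dbeta D B).
Local Notation L := (tleaves te).

Definition Sel : {set T} := [set l in L | beta l \in SelE].

Definition onP (a b v : T) : Prop :=
  exists p, [/\ path te a p, last a p = b, uniq (a :: p) & v \in a :: p].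

Definition inK (v : T) : Prop := exists a b, [/\ a \in Sel, b \in Sel & onP a b v].

Definition Kb (v : T) : bool := pb (inK v).

Local Notation KT := {v : T | Kb v}.

Definition teK : rel KT := fun a b => te (val a) (val b).

Lemma Sel_K a : a \in Sel -> Kb a.
Proof.
move=> aS; apply/pbP; exists a, a; split => //; exists [::]; split => //.
by rewrite inE.
Qed.

Lemma liftK a (Ha : Kb a) p : path te a p -> all Kb p ->
  exists q : seq KT, path teK (Sub a Ha) q /\ map val q = p.
Proof.
elim: p a Ha => [|z p IH] a Ha /=; first by exists [::].
move=> /andP[az pz] /andP[Hz ap].
have [q [pq qE]] := IH z Hz pz ap.
by exists (Sub z Hz :: q); rewrite /= qE; split => //; rewrite pq andbT.
Qed.

Lemma connK (x y : KT) p : path te (val x) p -> last (val x) p = val y ->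
  all Kb p -> connect teK x y.
Proof.
case: x => a Ha pp lp ap.
have [q [pq qE]] := liftK Ha pp ap.
apply/connectP; exists q => //; apply: val_inj.
by rewrite -lp -qE (last_map val).
Qed.

Lemma tree_T : is_tree te. Proof. exact: (dT_tree B). Qed.

Lemma sym_of_tree : symmetric te. Proof. by case: tree_T. Qed.

Lemma teK_sym : symmetric teK.
Proof. by case: tree_T => sym _ _ _ a b; rewrite /teK sym. Qed.

Lemma conn_wit (a b : T) p (Ha : Kb a) (x : KT) : a \in Sel -> b \in Sel ->
  path te a p -> last a p = b -> uniq (a :: p) -> val x \in a :: p ->
  connect teK (Sub a Ha) x.
Proof.
move=> aS bS pp lp up xin.
have allK : forall w, w \in a :: p -> Kb w.
  by move=> w win; apply/pbP; exists a, b; split => //; exists p.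
case: (splitPl xin) pp up allK => p1 p2 l1 pp up allK.
apply: (@connK (Sub a Ha) x p1) => //.
  by move: pp; rewrite cat_path => /andP[].
by apply/allP => w win; apply: allK; rewrite inE mem_cat win orbT.
Qed.

Lemma conn_Sel (a c : T) (Ha : Kb a) (Hc : Kb c) : a \in Sel -> c \in Sel ->
  connect teK (Sub a Ha) (Sub c Hc).
Proof.
move=> aS cS; case: tree_T => _ _ cT _.
move/connectP: (cT a c) => [p pp lp].
move: lp; case: (shortenP pp) => p' pp' up' _ lp.
apply: (conn_wit (b := c) (p := p')) => //.
by rewrite /= lp mem_last.
Qed.

Lemma connK_all (x y : KT) : connect teK x y.
Proof.
case/pbP: (valP x) => a [b [aS bS [p [pp lp up xin]]]].
case/pbP: (valP y) => c [d [cS dS [q [pq lq uq yin]]]].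
have cax := conn_wit (Sel_K aS) aS bS pp lp up xin.
have ccy := conn_wit (Sel_K cS) cS dS pq lq uq yin.
rewrite (sym_connect_sym teK_sym) in cax.
apply: connect_trans cax (connect_trans (conn_Sel (Sel_K aS) (Sel_K cS) aS cS) ccy).
Qed.

Lemma treeK : is_tree teK.
Proof.
case: tree_T => sym irr cT acyc; split.
- exact: teK_sym.
- by move=> a; rewrite /teK irr.
- exact: connK_all.
- move=> x p up sp pp.
  have := acyc (val x) (map val p).
  rewrite -(map_cons val) (map_inj_uniq val_inj) up size_map sp.
  rewrite path_map (last_map val) => /(_ isT isT pp).
  done.
Qed.

Lemma degK (t : KT) : tdeg teK t <= tdeg te (val t).
Proof.
rewrite /tdeg -(card_imset _ val_inj); apply: subset_leq_card.
by apply/subsetP => w /imsetP [u]; rewrite !inE => tu ->.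
Qed.

Lemma Sel_L l : l \in Sel -> l \in L.
Proof. by rewrite inE => /andP[]. Qed.

Lemma leafK (l : KT) : (l \in tleaves teK) = (val l \in Sel).
Proof.
apply/idP/idP; last first.
  move=> /Sel_L; rewrite !inE => d; exact: leq_trans (degK l) d.
apply: contraLR => nS.
case/pbP: (valP l) => a [b [aS bS [p [pp lp up lin]]]].
have allK : forall w, w \in a :: p -> Kb w.
  by move=> w win; apply/pbP; exists a, b; split => //; exists p.
have na : val l != a by apply: contraNneq nS => ->.
move: lin; rewrite inE (negbTE na) /= => lin.
case: (splitPr lin) pp lp up allK => p1 p2.
rewrite cat_path /= => /andP[pp1 /andP[tl pp2]].
rewrite last_cat /= => lp.
case: p2 pp2 lp => [|n p2] pp2 lp.
  by rewrite /= in lp; move: nS; have -> : val l = b by []; rewrite bS.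
move: pp2 => /= /andP[vn _].
move=> up allK.
have : uniq ((a :: p1) ++ (val l :: n :: p2)) by [].
rewrite cat_uniq => /and3P[_ dis _].
have nin : n \notin a :: p1.
  apply/negP => nin; move/negP: dis; apply; apply/hasP; exists n => //.
  by rewrite !inE eqxx orbT.
have previn : last a p1 \in a :: p1 by rewrite mem_last.
have Kp : Kb (last a p1) by apply: allK; move: previn; rewrite !inE mem_cat => /orP[->|->]; rewrite ?orbT.
have Kn : Kb n by apply: allK; rewrite !(inE, mem_cat) eqxx !orbT.
have neq : (Sub (last a p1) Kp : KT) != Sub n Kn.
  by rewrite -val_eqE /=; apply: contraNneq nin => <-.
rewrite inE -ltnNge /tdeg; apply: leq_trans (_ : #|[set (Sub (last a p1) Kp : KT); Sub n Kn]| <= _).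
  by rewrite cards2 neq.
apply: subset_leq_card; apply/subsetP => w; rewrite !inE => /orP[] /eqP -> //.
by rewrite /teK /= (sym_of_tree) tl.
Qed.

Lemma Sel_E l : l \in Sel -> beta l \in SelE.
Proof. by rewrite inE => /andP[]. Qed.

Lemma in_Sel l : l \in L -> beta l \in SelE -> l \in Sel.
Proof. by move=> lL bS; rewrite inE lL bS. Qed.

Definition betaK (l : KT) : dV H * dV H := pi2 pi (beta (val l)).

Lemma betaK_inj : {in tleaves teK &, injective betaK}.
Proof.
move=> l1 l2; rewrite !leafK => S1 S2 E.
apply: val_inj; apply: (dbeta_inj (Sel_L S1) (Sel_L S2)).
exact: SelE_inj (Sel_E S1) (Sel_E S2) E.
Qed.

Lemma betaK_in l : l \in tleaves teK -> betaK l \in edges H.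
Proof.
by rewrite leafK => /Sel_L /(dbeta_in) /(pi2_edge R1).
Qed.

Lemma betaK_onto e' : e' \in edges H -> exists2 l, l \in tleaves teK & betaK l = e'.
Proof.
move=> /SelE_onto [s sS <-].
have [l0 l0L bE] := @dbeta_onto _ B _ (subsetP SelE_sub _ sS).
have l0S : l0 \in Sel by rewrite inE l0L bE sS.
exists (Sub l0 (Sel_K l0S)); first by rewrite leafK.
by rewrite /betaK /= bE.
Qed.

Lemma degK3 t : tdeg teK t <= 3.
Proof. exact: leq_trans (degK t) (dT_deg _). Qed.

Definition BK : dbdec H := DBDec treeK degK3 betaK_inj betaK_in betaK_onto.

Lemma sideK (t u l : KT) : te (val t) (val u) ->
  (l \in tleaves teK) && connect (rme teK t u) u l =
  (val l \in Sel) && connect (rme te (val t) (val u)) (val u) (val l).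
Proof.
move=> tu.
have hom : forall a b, connect (rme teK t u) a b ->
    connect (rme te (val t) (val u)) (val a) (val b).
  apply: connect_homo => a b h; apply: connect1; move: h; by rewrite /rme /teK -!val_eqE.

rewrite leafK; case lS: (val l \in Sel) => //=.
apply/idP/idP; first exact: hom.
move=> cT.
have := cover_lem t (connK_all u l); case/orP => // /hom cT'.
by case: (disj_lem tree_T tu cT cT').
Qed.

Lemma orderK (t u : KT) : te (val t) (val u) ->
  edge_order (B := BK) t u <= edge_order (B := B) (val t) (val u).
Proof.
move=> tu; rewrite /edge_order.
set X := beta @: side (val t) (val u).
have -> : betaK @: side (B := BK) t u = pi2 pi @: (X :&: SelE).
  apply/setP => e'; apply/imsetP/imsetP => [[l]|[s]].
    rewrite inE /= => lin ->.
    move: (sideK l tu); rewrite lin => /esym /andP [lS cT].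
    exists (beta (val l)) => //; rewrite inE; apply/andP; split.
      by apply: imset_f; rewrite inE (Sel_L lS) cT.
    by move: lS; rewrite inE => /andP[].
  rewrite inE => /andP [/imsetP [l0 l0in ->] bS] ->.
  move: l0in; rewrite inE => /andP [l0L cT].
  have l0S : l0 \in Sel by rewrite inE l0L bS.
  exists (Sub l0 (Sel_K l0S)) => //.
  by rewrite inE /= (sideK _ tu) /= l0S.
by apply: (countA_fD R1 R3 R4 _ SelE_sub SelE_inj SelE_onto).
Qed.

Lemma dirA : exists B' : dbdec H, width B' <= width B.
Proof.
exists BK; apply/bigmax_leqP => [[t u]] /= tu.
apply: leq_trans (orderK tu) _.
exact: (leq_bigmax_cond (P := fun p : T * T => te p.1 p.2) (F := fun p => edge_order p.1 p.2) (val t, val u)).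
Qed.

End DirA.


Lemma rme_comm (T : finType) (te : rel T) t u : rme te t u =2 rme te u t.
Proof.
move=> a b; rewrite /rme; congr (_ && ~~ _).
by case: (a == t); case: (b == u); case: (a == u); case: (b == t).
Qed.

Section GenDec.
Variable G : digraph.
Variable B : dbdec G.
Local Notation T := (dT B).
Local Notation te := (@dTE G B).
Local Notation beta := (@dbeta G B).
Local Notation L := (tleaves te).

Lemma tree_B : is_tree te. Proof. exact: (dT_tree B). Qed.

Lemma in_side t u l : (l \in side t u) = (l \in L) && connect (rme te t u) u l.
Proof. by rewrite inE. Qed.

Lemma side_compl t u : te t u -> beta @: side u t = edges G :\: beta @: side t u.
Proof.
move=> tu; have [sym _ cT _] := tree_B.
apply/setP => e; apply/imsetP/idP => [[l]|].
  rewrite in_side => /andP[lL cl] ->.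
  rewrite in_setD (dbeta_in lL) andbT; apply/imsetP => [[l']].
  rewrite in_side => /andP[l'L cl'] E.
  move: cl'; rewrite -(dbeta_inj lL l'L E) => cl'.
  apply: (disj_lem tree_B tu cl').
  by rewrite (eq_connect (rme_comm te t u)).
rewrite in_setD => /andP[nI eE].
have [l lL lE] := @dbeta_onto _ B _ eE.
exists l => //; rewrite in_side lL /=.
have := cover_lem t (cT u l); case/orP => [cu|].
  by case/negP: nI; rewrite -lE; apply: imset_f; rewrite in_side lL cu.
by rewrite (eq_connect (rme_comm te t u)).
Qed.

Lemma side_sub t u : beta @: side t u \subset edges G.
Proof.
by apply/subsetP => e /imsetP [l]; rewrite in_side => /andP[lL _] ->; apply: dbeta_in.
Qed.

Lemma edge_order_sym t u : te t u -> edge_order t u = edge_order u t.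
Proof.
move=> tu; rewrite /edge_order (side_compl tu) fD_sym //; exact: side_sub.
Qed.

Lemma width_ge t u : te t u -> edge_order t u <= width B.
Proof.
move=> tu.
exact: (leq_bigmax_cond (P := fun p : T * T => te p.1 p.2) (F := fun p => edge_order p.1 p.2) (t, u)).
Qed.

Lemma SV0 : SV (set0 : {set dV G * dV G}) = set0.
Proof. by apply/setP => y; rewrite in_set0; apply/negP => /SVP [x [z [_ _]]]; rewrite in_set0. Qed.

Lemma SVE : SV (edges G) = set0.
Proof. by apply/setP => y; rewrite in_set0; apply/negP => /SVP [x [z [xy /negP []]]]; rewrite inEdges. Qed.

Lemma leaf_bound l : l \in L -> fD [set beta l] <= width B.
Proof.
move=> lL; have [sym irr cT _] := tree_B.
case: (pickP (te l)) => [p lp | nop].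
  have sE : side p l = [set l].
    apply/setP => x.
    rewrite in_side in_set1; apply/andP/eqP => [[xL]|->]; last by rewrite lL connect0.
    move/connectP => [q qp ->]; case: q qp => [//|y q] /= /andP [ly _].
    move: ly; rewrite /rme => /andP [ly].
    have yin : y \in [set u | te l u] by rewrite inE.
    have pin : p \in [set u | te l u] by rewrite inE.
    move: lL; rewrite inE /tdeg => /card_le1_eqP h.
    by rewrite (h _ _ yin pin) !eqxx /= orbT.
  have := width_ge (t := p) (u := l); rewrite /edge_order sE imset_set1; apply.
  by rewrite sym.
have allL : forall x, x = l.
  move=> x; move/connectP: (cT l x) => [[|y q] /= qp ->] //.
  by move: qp; rewrite nop.
have -> : [set beta l] = edges G.
  apply/setP => e; rewrite inE; apply/eqP/idP => [->|eE]; first by apply: dbeta_in.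
  by have [l' _ <-] := @dbeta_onto _ B _ eE; rewrite (allL l').
by rewrite /fD setDv SVE SV0 setU0 cards0.
Qed.

End GenDec.

Lemma trivial_dec (G : digraph) : (forall e, e \notin edges G) ->
  exists B : dbdec G, width B = 0.
Proof.
move=> none.
have tr : is_tree (fun _ _ : void => false) by split => //; case.
have dg : forall t : void, tdeg (fun _ _ : void => false) t <= 3 by case.
have inj : {in tleaves (fun _ _ : void => false) &, injective (fun t : void => match t with end : dV G * dV G)} by case.
have bin : forall t : void, t \in tleaves (fun _ _ : void => false) -> (match t with end : dV G * dV G) \in edges G by case.
have bon : forall e, e \in edges G -> exists2 t : void, t \in tleaves (fun _ _ : void => false) & (match t with end : dV G * dV G) = e.
  by move=> e; rewrite (negbTE (none e)).
exists (DBDec tr dg inj bin bon).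
by rewrite /width big_pred0.
Qed.


Section DirB.
Variables (D H : digraph) (pi : dV D -> dV H) (Q : {set dV D}).
Hypothesis R1 : forall u v, dE u v -> dE (pi u) (pi v).
Hypothesis R2 : forall a b, dE a b -> exists u v, [/\ pi u = a, pi v = b & dE u v].
Hypothesis R3 : forall u v, pi u = pi v -> u = v \/ (u \in Q /\ v \in Q).
Hypothesis R4 : (forall u, u \in Q -> is_source u) \/ (forall u, u \in Q -> is_sink u).
Hypothesis R5 : #|Q| <= 2.

Definition fiber (e' : dV H * dV H) : {set dV D * dV D} :=
  [set e in edges D | pi2 pi e == e'].

Lemma in_fiber e e' : (e \in fiber e') = (e \in edges D) && (pi2 pi e == e').
Proof. by rewrite !inE. Qed.

Definition merged e' := 1 < #|fiber e'|.

Lemma fiber_gen e' (g h : dV D * dV D -> dV D) :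
  (forall e f, g e = g f -> h e = h f -> e = f) ->
  (forall e f, e \in fiber e' -> f \in fiber e' -> h e = h f) ->
  (forall e f, e \in fiber e' -> f \in fiber e' -> pi (g e) = pi (g f)) ->
  1 < #|fiber e'| -> #|fiber e'| <= 2.
Proof.
move=> gh hE gE /card_gt1P [x [y [xin yin xy]]].
have gQ : forall e, e \in fiber e' -> g e \in Q.
  move=> e ein.
  have [f fin fe] : exists2 f, f \in fiber e' & f != e.
    case: (eqVneq x e) => [xe|xe]; last by exists x.
    by exists y => //; rewrite -xe eq_sym.
  case: (R3 (gE _ _ ein fin)) => [gef|[]//].
  by case/negP: fe; apply/eqP; apply: gh; rewrite ?gef ?(hE _ _ ein fin).
rewrite -(card_in_imset (f := g)); last first.
  by move=> e f ein fin gef; apply: gh gef (hE _ _ ein fin).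
apply: leq_trans R5; apply: subset_leq_card; apply/subsetP => v /imsetP [e ein ->].
exact: gQ.
Qed.

Lemma fiber_le2 e' : #|fiber e'| <= 2.
Proof.
case: (leqP #|fiber e'| 1) => [h|h]; first exact: leq_trans h _.
have pE : forall e, e \in fiber e' -> pi2 pi e = e'.
  by move=> e; rewrite in_fiber => /andP[_ /eqP].
have eE : forall e, e \in fiber e' -> dE e.1 e.2.
  by move=> e; rewrite in_fiber inEdges => /andP[].
case: R4 => R.
- apply: (@fiber_gen e' fst snd) => //.
  + by move=> [a b] [c d] /= -> ->.
  + move=> e f ein fin; have := pE _ ein; rewrite -(pE _ fin) => [[_ E]].
    case: (R3 E) => // [[eQ _]].
    by move: (R _ eQ) => /forallP /(_ e.1); rewrite (eE _ ein).
  + by move=> e f ein fin; have := pE _ ein; rewrite -(pE _ fin) => [[E _]].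
- apply: (@fiber_gen e' snd fst) => //.
  + by move=> [a b] [c d] /= -> ->.
  + move=> e f ein fin; have := pE _ ein; rewrite -(pE _ fin) => [[E _]].
    case: (R3 E) => // [[eQ _]].
    by move: (R _ eQ) => /forallP /(_ e.2); rewrite (eE _ ein).
  + by move=> e f ein fin; have := pE _ ein; rewrite -(pE _ fin) => [[_ E]].
Qed.

Variable B : dbdec H.
Variable d0 : dV D * dV D.
Local Notation T := (dT B).
Local Notation te := (@dTE H B).
Local Notation beta := (@dbeta H B).
Local Notation L := (tleaves te).

Definition isC (e : dV D * dV D) : bool := (e \in edges D) && merged (pi2 pi e).
Local Notation C := {e : dV D * dV D | isC e}.
Local Notation T' := (T + C)%type.

Definition te' : rel T' := fun x y =>
  match x, y with
  | inl a, inl b => te a b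
  | inl a, inr c | inr c, inl a => (a \in L) && (beta a == pi2 pi (val c))
  | _, _ => false
  end.

Definition beta' (x : T') : dV D * dV D :=
  match x with inl a => odflt d0 (canon pi (beta a)) | inr c => val c end.

Lemma canon_leaf a : a \in L -> exists2 s, canon pi (beta a) = Some s & s \in fiber (beta a).
Proof.
move=> aL; have := dbeta_in aL; rewrite inEdges => /R2 [u [v [P1 P2 uv]]].
case Ec: (canon pi (beta a)) => [s|].
  by exists s => //; move/canonP: Ec; rewrite in_fiber.
move: (canonN Ec (u, v)); rewrite inEdges uv /= /pi2 /= P1 P2.
by rewrite -surjective_pairing eqxx.
Qed.

Lemma fiber_single e' s e : ~~ merged e' -> s \in fiber e' -> e \in fiber e' -> e = s.
Proof.
rewrite /merged -leqNgt => /card_le1_eqP h sin ein; exact: h.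
Qed.

Lemma par (c : C) : exists2 l, l \in L & beta l = pi2 pi (val c).
Proof.
case: c => e /= /andP [eE _].
exact: (@dbeta_onto _ B _ (pi2_edge R1 eE)).
Qed.

Lemma par_uniq a b e' : a \in L -> b \in L -> beta a = e' -> beta b = e' -> a = b.
Proof. by move=> aL bL <- E; apply: (dbeta_inj aL bL); rewrite E. Qed.

Lemma tree_H : is_tree te. Proof. exact: (dT_tree B). Qed.

Lemma sym' : symmetric te'.
Proof.
case: tree_H => sym _ _ _; by move=> [a|c] [b|d] //=; rewrite sym.
Qed.

Lemma conn_inl a b : connect te a b -> connect te' (inl a) (inl b).
Proof. by apply: connect_homo => x y xy; apply: connect1. Qed.

Lemma conn_any (x : T') : exists a, connect te' x (inl a).
Proof.
case: x => [a|c]; first by exists a; rewrite connect0.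
have [l lL lE] := par c; exists l; apply: connect1; by rewrite /= lL lE eqxx.
Qed.

Lemma tree' : is_tree te'.
Proof.
have [sym irr cT acyc] := tree_H; split.
- exact: sym'.
- by case=> [a|c] //=; rewrite irr.
- move=> x y; have [a xa] := conn_any x; have [b yb] := conn_any y.
  apply: connect_trans xa (connect_trans (conn_inl (cT a b)) _).
  by rewrite (sym_connect_sym sym').
- move=> x p up sp pp.
  case: (boolP (has (fun s : T' => if s is inr _ then true else false) (x :: p))).
    case/hasP => [[//|c] cin _]; apply/negP => lx.
    have [y [z [yz cy cz]]] := cycle_nbrs sym' up sp pp lx cin.
    case: y z yz cy cz => [y|//] [z|//] /= yz /andP [yL /eqP yE] /andP [zL /eqP zE].
    by move: yz; rewrite (par_uniq yL zL yE zE) eqxx.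
  case: x up pp => [x0|//] up pp /= nh.
  set p0 := map (fun s : T' => if s is inl a then a else x0) p.
  have pE : map inl p0 = p.
    rewrite /p0 -map_comp; elim: p nh {up pp sp p0} => [//|[a|c] p IH] /=.
      by move=> nh; rewrite IH.
    by [].
  move: up pp sp; rewrite -pE => up pp sp.
  rewrite (last_map inl) /=.
  apply: acyc.
  + have inj : injective (@inl T C) by move=> ? ? [].
    by move: up; rewrite -(map_cons inl) (map_inj_uniq inj).
  + by rewrite size_map in sp.
  + by rewrite path_map in pp.
Qed.

Definition kids (a : T) : {set C} := [set c : C | (a \in L) && (beta a == pi2 pi (val c))].

Lemma in_kids a c : (c \in kids a) = (a \in L) && (beta a == pi2 pi (val c)).
Proof. by rewrite /kids in_set. Qed.

Lemma inl_inl (A : {set T}) b : (inl b \in (inl @: A : {set T'})) = (b \in A).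
Proof. by apply/imsetP/idP => [[x xin [->]]|bin] //; exists b. Qed.
Lemma inl_inr (A : {set C}) b : (inl b \in (inr @: A : {set T'})) = false.
Proof. by apply/imsetP => [[]]. Qed.
Lemma inr_inl (A : {set T}) c : (inr c \in (inl @: A : {set T'})) = false.
Proof. by apply/imsetP => [[]]. Qed.
Lemma inr_inr (A : {set C}) c : (inr c \in (inr @: A : {set T'})) = (c \in A).
Proof. by apply/imsetP/idP => [[x xin [->]]|cin] //; exists c. Qed.

Lemma nbrs_inl a : [set y | te' (inl a) y] = inl @: [set b | te a b] :|: inr @: kids a.
Proof.
apply/setP => [[b|c]]; rewrite in_setU ?inl_inl ?inl_inr ?inr_inl ?inr_inr !inE //=.
  by rewrite orbF.
by rewrite [a \in L]inE.
Qed.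

Lemma card_sum (A : {set T}) (K : {set C}) : #|(inl @: A : {set T'}) :|: inr @: K| = #|A| + #|K|.
Proof.
rewrite cardsU (card_imset _ (fun x y (E : inl x = inl y) => ltac:(by case: E))).
rewrite (card_imset _ (fun x y (E : inr x = inr y) => ltac:(by case: E))).
have -> : (inl @: A : {set T'}) :&: inr @: K = set0.
  by apply/setP => [[b|c]]; rewrite in_setI ?inl_inr ?inr_inl ?andbF ?inE.
by rewrite cards0 subn0.
Qed.

Lemma tdeg_inl a : tdeg te' (inl a) = tdeg te a + #|kids a|.
Proof. by rewrite /tdeg nbrs_inl card_sum. Qed.

Lemma kids_card a : #|kids a| = if (a \in L) && merged (beta a) then #|fiber (beta a)| else 0.
Proof.
rewrite -(card_imset _ val_inj).
case aL: (a \in L) => /=; last first.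
  rewrite (_ : kids a = set0) ?imset0 ?cards0 //.
  by apply/setP => c; rewrite in_kids aL inE.
case: ifP => m.
  suff -> : val @: kids a = fiber (beta a) by [].
  apply/setP => e; apply/imsetP/idP => [[c]|ein].
    rewrite in_kids aL /= => /eqP E ->; rewrite in_fiber -E eqxx andbT.
    by case: c {E} => ? /= /andP[].
  have hC : isC e.
    by move: ein; rewrite in_fiber /isC => /andP[-> /eqP ->].
  by exists (Sub e hC) => //; rewrite in_kids aL /=; move: ein; rewrite in_fiber => /andP[_ /eqP ->].
rewrite (_ : _ @: _ = set0) ?cards0 //.
apply/setP => e; rewrite inE; apply/imsetP => [[c]].
rewrite in_kids aL /= => /eqP E _; case: c E => e0 /= /andP[_]; rewrite /merged => + E.
by move: m; rewrite /merged E => ->.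
Qed.

Lemma deg' x : tdeg te' x <= 3.
Proof.
case: x => [a|c].
  rewrite tdeg_inl kids_card; case aL: (a \in L) => /=.
    case: ifP => _; last by rewrite addn0; apply: dT_deg.
    move: aL; rewrite inE => d.
    exact: leq_add d (fiber_le2 _).
  by rewrite addn0; apply: dT_deg.
have [l lL lE] := par c.
apply: leq_trans (_ : #|[set (inl l : T')]| <= 3); last by rewrite cards1.
apply: subset_leq_card; apply/subsetP => [[b|d]]; rewrite !inE //= => /andP[bL /eqP bE].
by rewrite (par_uniq bL lL bE lE).
Qed.

Lemma leaf_inr c : inr c \in tleaves te'.
Proof.
have [l lL lE] := par c.
rewrite inE /tdeg; apply: leq_trans (_ : #|[set (inl l : T')]| <= 1); last by rewrite cards1.
apply: subset_leq_card; apply/subsetP => [[b|d]]; rewrite !inE //= => /andP[bL /eqP bE].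
by rewrite (par_uniq bL lL bE lE).
Qed.

Lemma leaf_inl a : (inl a \in tleaves te') = (a \in L) && ~~ merged (beta a).
Proof.
rewrite [inl a \in _]inE tdeg_inl kids_card.
case aL: (a \in L) => /=; last first.
  by rewrite addn0; move: aL; rewrite inE => ->.
move: (aL); rewrite inE => aL'.
case: ifP => m /=; last by rewrite addn0.
by apply/negbTE; rewrite -ltnNge; apply: leq_trans m (leq_addl _ _).
Qed.

Lemma beta'_inl a s : a \in L -> ~~ merged (beta a) -> s \in fiber (beta a) -> beta' (inl a) = s.
Proof.
move=> aL m sin; have [s' sE s'in] := canon_leaf aL.
by rewrite /= sE /=; apply: (fiber_single m).
Qed.

Lemma beta'_in x : x \in tleaves te' -> beta' x \in edges D.
Proof.
case: x => [a|c]; last by case: c => e /= /andP[eE _] _.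
rewrite leaf_inl => /andP [aL _]; have [s sE sin] := canon_leaf aL.
by rewrite /= sE; move: sin; rewrite in_fiber => /andP[].
Qed.

Lemma beta'_pi2 a : a \in L -> pi2 pi (beta' (inl a)) = beta a.
Proof.
move=> aL; have [s sE sin] := canon_leaf aL.
by rewrite /= sE; move: sin; rewrite in_fiber => /andP[_ /eqP].
Qed.

Lemma beta'_inj : {in tleaves te' &, injective beta'}.
Proof.
have key : forall a (c : C), (inl a : T') \in tleaves te' -> beta' (inl a) <> val c.
  move=> a c; rewrite leaf_inl => /andP [aL m] E.
  case: c E => e /= /andP[_ me] E.
  move: me; rewrite -E beta'_pi2 // => me.
  by move: m; rewrite me.
move=> [a|c] [b|d] xL yL //.
- move=> E; congr inl; apply: (@dbeta_inj _ B).
  + by move: xL; rewrite leaf_inl => /andP[].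
  + by move: yL; rewrite leaf_inl => /andP[].
  + rewrite -beta'_pi2 ?E ?beta'_pi2 //.
      by move: yL; rewrite leaf_inl => /andP[].
    by move: xL; rewrite leaf_inl => /andP[].
- by move/key: xL => k /k.
- by move=> E; move/key: yL => k; case: (k c); rewrite -E.
- by move=> E; congr inr; apply: val_inj.
Qed.

Lemma beta'_onto e : e \in edges D -> exists2 x, x \in tleaves te' & beta' x = e.
Proof.
move=> eE; have [l lL lE] := @dbeta_onto _ B _ (pi2_edge R1 eE).
case m: (merged (pi2 pi e)).
  have hC : isC e by rewrite /isC eE m.
  by exists (inr (Sub e hC)); rewrite ?leaf_inr.
exists (inl l); first by rewrite leaf_inl lL lE m.
apply: beta'_inl => //; first by rewrite lE m.
by rewrite in_fiber eE lE eqxx.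
Qed.

Definition BB : dbdec D := DBDec tree' deg' beta'_inj beta'_in beta'_onto.

Section Edge.
Variables t u : T.
Hypothesis tu : te t u.

Definition reachP (x : T') : Prop :=
  match x with
  | inl a => connect (rme te t u) u a
  | inr c => exists2 l, (l \in L) && (beta l == pi2 pi (val c)) & connect (rme te t u) u l
  end.

Lemma reach_fwd x : connect (rme te' (inl t) (inl u)) (inl u) x -> reachP x.
Proof.
move/connectP => [p pp ->]; elim/last_ind: p pp => [|p z IH] /=; first by rewrite connect0.
rewrite rcons_path last_rcons => /andP [pp st]; have := IH pp.
move: st; rewrite /rme; case: (last (inl u) p) => [a|c]; case: z => [b|d] //=.
- by move=> h IHa; apply: connect_trans IHa (connect1 (e := rme te t u) h).
- by move=> /andP [h _] IHa; exists a.
- move=> /andP [/andP [bL /eqP bE] _] [l /andP [lL /eqP lE] cl].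
  by rewrite (par_uniq bL lL bE lE).
Qed.

Lemma reach_bwd_l a : connect (rme te t u) u a -> connect (rme te' (inl t) (inl u)) (inl u) (inl a).
Proof. move=> h; apply: (connect_homo (f := @inl T C) _ h) => x y xy; apply: connect1; exact: xy. Qed.

Lemma reach_bwd_r (c : C) l : (l \in L) && (beta l == pi2 pi (val c)) ->
  connect (rme te t u) u l -> connect (rme te' (inl t) (inl u)) (inl u) (inr c).
Proof.
move=> hl cl; apply: connect_trans (reach_bwd_l cl) (connect1 _).
rewrite /rme /=; apply/andP; split; first exact: hl.
by apply/negP; case/orP => /andP [_ /eqP E]; case: E.
Qed.

Lemma side_inl : beta' @: side (B := BB) (inl t) (inl u) =
  [set e in edges D | pi2 pi e \in beta @: side t u].
Proof.
apply/setP => e; apply/imsetP/idP.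
  case => x; rewrite (@in_side _ BB) => /andP [xL cx] ->.
  have := reach_fwd cx; case: x xL {cx} => [a|c] xL /=.
    move: (xL); rewrite leaf_inl => /andP [aL m] ca.
    rewrite inPre (beta'_in xL) beta'_pi2 //=.
    by apply: imset_f; rewrite (@in_side _ B) aL.
  move=> [l /andP [lL /eqP lE] cl].
  rewrite inPre; case: c {xL} lE => e0 /= /andP [e0E _] lE; rewrite e0E /= -lE.
  by apply: imset_f; rewrite (@in_side _ B) lL.
rewrite inPre => /andP [eE /imsetP [l]]; rewrite (@in_side _ B) => /andP [lL cl] lE.
case m: (merged (pi2 pi e)).
  have hC : isC e by rewrite /isC eE m.
  exists (inr (Sub e hC)) => //; rewrite (@in_side _ BB) leaf_inr /=.
  by apply: (reach_bwd_r (l := l)) => //; rewrite lL /= lE eqxx.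
exists (inl l).
  by rewrite (@in_side _ BB) leaf_inl lL -lE m /=; apply: reach_bwd_l.
apply/esym; apply: beta'_inl => //; first by rewrite -lE m.
by rewrite in_fiber eE lE eqxx.
Qed.

Lemma order_inl : edge_order (B := BB) (inl t) (inl u) <= width B.
Proof.
rewrite /edge_order side_inl; apply: leq_trans (countB_pre R1 R3 R4 _) _.
exact: width_ge tu.
Qed.

End Edge.

Lemma side_inr a (c : C) : te' (inl a) (inr c) -> side (B := BB) (inl a) (inr c) = [set inr c].
Proof.
move=> /= /andP [aL /eqP aE].
apply/setP => x; rewrite (@in_side _ BB) in_set1; apply/andP/eqP => [[xL]|->]; last first.
  by rewrite leaf_inr connect0.
move/connectP => [[|y p] /= pp ->] //; move: pp => /andP [h _]; exfalso.
case: y h => [b|d] //=; rewrite /rme /= => /andP [/andP [bL /eqP bE]].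
rewrite (par_uniq bL aL bE aE). by rewrite !eqxx.
Qed.

Lemma order_inr a (c : C) : te' (inl a) (inr c) -> edge_order (B := BB) (inl a) (inr c) <= width B.
Proof.
move=> ac; rewrite /edge_order side_inr // imset_set1 /=.
move: ac => /= /andP [aL /eqP aE].
case: c aE => e /= /andP [eE _] aE.
apply: leq_trans (countB_one R1 R3 R4 eE) _; rewrite -aE.
exact: leaf_bound aL.
Qed.

Lemma dirB0 : exists B' : dbdec D, width B' <= width B.
Proof.
exists BB; apply/bigmax_leqP => [[x y]] /= xy.
case: x y xy => [t|c] [u|d] // xy.
- exact: order_inl.
- exact: order_inr.
- rewrite (@edge_order_sym _ BB (inr c) (inl u) xy); apply: order_inr.
  by rewrite sym'.
Qed.

End DirB.


Definition good (D H : digraph) : Prop :=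
  exists (pi : dV D -> dV H) (Q : {set dV D}),
    [/\ (forall u v, dE u v -> dE (pi u) (pi v)),
        (forall a b, dE a b -> exists u v, [/\ pi u = a, pi v = b & dE u v]),
        (forall u v, pi u = pi v -> u = v \/ (u \in Q /\ v \in Q)),
        (forall u, u \in Q -> is_source u) \/ (forall u, u \in Q -> is_sink u)
      & #|Q| <= 2].

Definition transfer (D H : digraph) : Prop :=
  (forall B : dbdec D, exists B' : dbdec H, width B' <= width B) /\
  (forall B : dbdec H, exists B' : dbdec D, width B' <= width B).

Lemma good_transfer D H : good D H -> transfer D H.
Proof.
move=> [pi [Q [R1 R2 R3 R4 R5]]]; split => B.
  exact: dirA R1 R2 R3 R4 B.
case: (pickP (fun _ : dV D => true)) => [v _|none].
  exact: dirB0 R1 R2 R3 R4 R5 B (v, v).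
have [B' w] := @trivial_dec D (fun e => ltac:(by case: e => a b; move: (none a))).
by exists B'; rewrite w.
Qed.

Lemma good_iso D H : isomorphic D H -> good D H.
Proof.
move=> [f [[g fg gf] fE]].
exists f, set0; split.
- by move=> u v; rewrite fE.
- by move=> a b ab; exists (g a), (g b); rewrite !gf -fE !gf.
- by move=> u v /(can_inj fg) ->; left.
- by left => u; rewrite inE.
- by rewrite cards0.
Qed.

Lemma good_step D H : ss_step D H -> good D H.
Proof.
move=> [x [y [/andP [xy ss] [f [fs fxy finj fE]]]]].
exists f, [set x; y]; split.
- by move=> u v uv; apply/fE; exists u, v.
- by move=> a b /fE [u [v [? ? ?]]]; exists u, v.
- move=> u v /finj [->|[[-> ->]|[-> ->]]]; [by left|right|right];
    by rewrite !inE !eqxx ?orbT.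
- case/orP: ss => /andP [sx sy]; [left|right] => u; rewrite !inE => /orP [] /eqP -> //.
- by rewrite cards2 ltnS leq_b1.
Qed.

Lemma transfer_trans D D' H : transfer D D' -> transfer D' H -> transfer D H.
Proof.
move=> [a1 b1] [a2 b2]; split => B.
  have [B1 w1] := a1 B; have [B2 w2] := a2 B1; exists B2; exact: leq_trans w2 w1.
have [B1 w1] := b2 B; have [B2 w2] := b1 B1; exists B2; exact: leq_trans w2 w1.
Qed.

Lemma ss_transfer D H : ss_equiv D H -> transfer D H.
Proof.
elim => [D0 H0 iso|D0 D1 H0 st _ IH].
  exact: good_transfer (good_iso iso).
exact: transfer_trans (good_transfer (good_step st)) IH.
Qed.

Lemma transfer_dbw D H k : transfer D H -> dbw_is D k -> dbw_is H k.
Proof.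
move=> [a b] [[B wB] minB].
have [B' w'] := a B.
split; last first.
  by move=> B2; have [B3 w3] := b B2; exact: leq_trans (minB B3) w3.
exists B'; apply/eqP; rewrite eqn_leq -{1}wB w' /=.
by have [B3 w3] := b B'; exact: leq_trans (minB B3) w3.
Qed.

Theorem mainTheorem8 (D H : digraph) :
  ss_equiv D H -> forall k : nat, dbw_is D k <-> dbw_is H k.
Proof.
move=> e k; have [a b] := ss_transfer e; split.
  exact: transfer_dbw.
by apply: transfer_dbw; split.
Qed.
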